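(* Let $\{\triangleright\}\subseteq\sigma\subseteq\{\triangleright,\wedge,\mathrm{upd},\sqcup\}$ and let $\mathcal{A}$ be a $\sigma$-algebra. Then $\mathcal{A}$ has a meet-complete representation by partial functions if and only if $\mathcal{A}$ is representable by partial functions and its atoms are separating.
   Context: The operations are interpreted on partial functions as: $f \triangleright g = \{(x,y) \in g : x \notin \mathrm{dom}(f)\}$; $f\wedge g = f\cap g$; $\mathrm{upd}(f,g)(x)$ is $f(x)$ if $f(x)$ defined and $g(x)$ undefined, $g(x)$ if both defined, undefined otherwise; $(f\sqcup g)(x)$ is $f(x)$ if defined, else $g(x)$. A representation by partial functions is an isomorphism onto an algebra of partial functions with these operations. Define $0 := a\triangleright a$, $a\lhd b := (a\triangleright b)\triangleright b$, $a \le b :\iff a\lhd b = a$; for representable algebras this is a partial order with least element $0$ and $a\le b\iff\theta(a)\subseteq\theta(b)$. An atom is a minimal nonzero element; atoms are separating if whenever $a\not\le b$ there is an atom $c\le a$ with $c\not\le b$. A representation $\theta$ is meet complete if $\theta(\bigwedge S)=\bigcap\theta[S]$ for every nonempty $S$ whose meet exists in $(\mathcal{A},\le)$. *)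

(* Defs.v *)
(* A sigma-algebra: the operation [rst] (a |> b) is always present;
   each of meet (/\), upd, join (the "override" \sqcup) is in sigma iff the
   corresponding field is [Some _]. *)
Record sigma_alg := {
  carrier :> Type;
  rst : carrier -> carrier -> carrier;
  omeet : option (carrier -> carrier -> carrier);
  oupd : option (carrier -> carrier -> carrier);
  ojoin : option (carrier -> carrier -> carrier)
}.

Definition pfun (X : Type) := X -> option X.

Definition pf_rst {X} (f g : pfun X) : pfun X :=
  fun x => match f x with Some _ => None | None => g x end.

Definition pf_is_meet {X} (f g h : pfun X) : Prop :=
  forall x y, h x = Some y <-> (f x = Some y /\ g x = Some y).

Definition pf_upd {X} (f g : pfun X) : pfun X :=
  fun x => match f x, g x with
           | Some y, None => Some y
           | Some _, Some z => Some z
           | None, _ => None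
           end.

Definition pf_join {X} (f g : pfun X) : pfun X :=
  fun x => match f x with Some y => Some y | None => g x end.

Definition pf_eq {X} (f g : pfun X) : Prop := forall x, f x = g x.

Definition is_rep (A : sigma_alg) (X : Type) (theta : A -> pfun X) : Prop :=
  (forall a b : A, pf_eq (theta a) (theta b) -> a = b) /\
  (forall a b : A, pf_eq (theta (rst A a b)) (pf_rst (theta a) (theta b))) /\
  (forall m, omeet A = Some m ->
     forall a b : A, pf_is_meet (theta a) (theta b) (theta (m a b))) /\
  (forall u, oupd A = Some u ->
     forall a b : A, pf_eq (theta (u a b)) (pf_upd (theta a) (theta b))) /\
  (forall j, ojoin A = Some j ->
     forall a b : A, pf_eq (theta (j a b)) (pf_join (theta a) (theta b))).

Definition representable (A : sigma_alg) : Prop :=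
  exists (X : Type) (theta : A -> pfun X), is_rep A X theta.

Definition ale {A : sigma_alg} (a b : A) : Prop := rst A (rst A a b) b = a.

(* 0 := a |> a ; we write the zero test for d as d = d |> d *)
Definition is_zero {A : sigma_alg} (d : A) : Prop := d = rst A d d.

Definition is_atom {A : sigma_alg} (c : A) : Prop :=
  ~ is_zero c /\ forall d : A, ale d c -> is_zero d \/ d = c.

Definition atoms_separating (A : sigma_alg) : Prop :=
  forall a b : A, ~ ale a b ->
    exists c : A, is_atom c /\ ale c a /\ ~ ale c b.

Definition is_glb {A : sigma_alg} (S : A -> Prop) (m : A) : Prop :=
  (forall s, S s -> ale m s) /\
  (forall l, (forall s, S s -> ale l s) -> ale l m).

Definition meet_complete (A : sigma_alg) (X : Type) (theta : A -> pfun X) : Prop :=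
  forall (S : A -> Prop) (m : A), (exists s, S s) -> is_glb S m ->
    forall x y, theta m x = Some y <-> (forall s, S s -> theta s x = Some y).

Definition has_meet_complete_rep (A : sigma_alg) : Prop :=
  exists (X : Type) (theta : A -> pfun X), is_rep A X theta /\ meet_complete A X theta.

(* Main.v *)
Require Import Defs.
From Stdlib Require Import Classical ClassicalEpsilon.

Definition sub {X} (f g : pfun X) := forall x y, f x = Some y -> g x = Some y.
Definition res {A : sigma_alg} (c a : A) : A := rst A (rst A c a) a.
Definition cin {A : sigma_alg} {X} (th : A -> pfun X) (c a : A) :=
  exists x, th c x <> None /\ th a x <> None.

Section S.
Context {A : sigma_alg} {X : Type} {th : A -> pfun X} (H : is_rep A X th).
Implicit Types a b c d e l m s : A.

Lemma L_inj a b : pf_eq (th a) (th b) -> a = b.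
Proof. exact (proj1 H a b). Qed.
Lemma L_rst a b x : th (rst A a b) x = pf_rst (th a) (th b) x.
Proof. exact (proj1 (proj2 H) a b x). Qed.

Lemma L_res a c x : th (res c a) x = match th c x with Some _ => th a x | None => None end.
Proof. unfold res. rewrite L_rst. unfold pf_rst. rewrite L_rst. unfold pf_rst.
  destruct (th c x); [reflexivity|]. destruct (th a x); reflexivity. Qed.

Lemma rst_some_l a b x : th a x <> None -> th (rst A a b) x = None.
Proof. intro Ha. rewrite L_rst; unfold pf_rst; destruct (th a x) eqn:E; [reflexivity|congruence]. Qed.
Lemma rst_none_l a b x : th a x = None -> th (rst A a b) x = th b x.
Proof. intro Ha. rewrite L_rst; unfold pf_rst; rewrite Ha; reflexivity. Qed.
Lemma rst_some a b x w : th (rst A a b) x = Some w -> th a x = None /\ th b x = Some w.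
Proof. rewrite L_rst; unfold pf_rst; destruct (th a x); intro Hw; [discriminate| auto]. Qed.
Lemma rst_self d x : th (rst A d d) x = None.
Proof. rewrite L_rst; unfold pf_rst; destruct (th d x) eqn:E; reflexivity. Qed.

Lemma L_sub_ale d c : sub (th d) (th c) -> ale d c.
Proof. intro Hs. unfold ale. apply L_inj. intro x. change (th (res d c) x = th d x).
  rewrite L_res. destruct (th d x) eqn:E; [apply Hs; exact E | reflexivity]. Qed.

Lemma L_ale_sub d c : ale d c -> sub (th d) (th c).
Proof. unfold ale. intros E x y Hd. rewrite <- E in Hd. change (th (res d c) x = Some y) in Hd.
  revert Hd. rewrite L_res. destruct (th d x); [auto | discriminate]. Qed.

Lemma L_zero d : is_zero d <-> forall x, th d x = None.
Proof. split.
  - intros E x. unfold is_zero in E. rewrite E. apply rst_self.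
  - intro Hn. unfold is_zero. apply L_inj. intro x. rewrite rst_self. apply Hn. Qed.

Lemma L_antisym a b : ale a b -> ale b a -> a = b.
Proof. intros Hab Hba. apply L_inj. intro x.
  pose proof (L_ale_sub _ _ Hab x) as H1. pose proof (L_ale_sub _ _ Hba x) as H2.
  destruct (th a x) as [p|] eqn:E1; destruct (th b x) as [q|] eqn:E2; try reflexivity.
  all: first [ specialize (H1 _ eq_refl) | specialize (H2 _ eq_refl) ]; congruence. Qed.

Lemma L_atom_ne c : is_atom c -> exists x, th c x <> None.
Proof. intros [Hnz _]. apply NNPP; intro Hno. apply Hnz. apply L_zero. intro x.
  destruct (th c x) eqn:E; [exfalso; apply Hno; exists x; rewrite E; discriminate | reflexivity]. Qed.

Lemma L_dich c a : ~ cin th c a -> forall x, th c x <> None -> th a x = None.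
Proof. intros Hn x Hc. apply NNPP; intro Ha. apply Hn. exists x; auto. Qed.

Lemma L_cin_all c a : is_atom c -> cin th c a -> forall x, th c x <> None -> th a x <> None.
Proof. intros [Hnz Hat] [x0 [Hc0 Ha0]].
  assert (Hd : ale (res a c) c).
  { apply L_sub_ale. intros x y. rewrite L_res. destruct (th a x); [auto|discriminate]. }
  destruct (Hat _ Hd) as [Z|Hdc].
  - exfalso. rewrite L_zero in Z. specialize (Z x0). revert Z. rewrite L_res.
    destruct (th a x0) eqn:E; [auto|congruence].
  - intros x Hc Ha. apply Hc. rewrite <- Hdc. rewrite L_res. rewrite Ha. reflexivity. Qed.

Lemma L_val c a b : (forall x, th c x <> None -> th a x = th b x) -> res c a = res c b.
Proof. intro Hx. apply L_inj. intro x. rewrite !L_res.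
  destruct (th c x) eqn:E; [apply Hx; rewrite E; discriminate | reflexivity]. Qed.

Lemma L_val_rev c a b : res c a = res c b -> forall x, th c x <> None -> th a x = th b x.
Proof. intros E x Hc. pose proof (f_equal (fun t => th t x) E) as F. simpl in F.
  revert F. rewrite !L_res. destruct (th c x); [auto | congruence]. Qed.

Lemma L_P c a : is_atom c -> (~ is_zero (res c a) <-> cin th c a).
Proof. intro Hat. split.
  - intro Hnz. apply NNPP; intro Hn. apply Hnz. apply L_zero. intro x. rewrite L_res.
    destruct (th c x) eqn:E; [apply (L_dich _ _ Hn x); rewrite E; discriminate | reflexivity].
  - intros [x0 [Hc Ha]] Hz. rewrite L_zero in Hz. specialize (Hz x0). revert Hz.
    rewrite L_res. destruct (th c x0) eqn:E; congruence. Qed.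

Definition thp (a : A) : pfun A := fun c =>
  if excluded_middle_informative (is_atom c /\ ~ is_zero (res c a)) then Some (res c a) else None.

Lemma thp_in c a : is_atom c -> cin th c a -> thp a c = Some (res c a).
Proof. intros Hat Ic. unfold thp. destruct (excluded_middle_informative _) as [_|n]; [reflexivity|].
  exfalso; apply n; split; [assumption| apply (proj2 (L_P c a Hat)); assumption]. Qed.

Lemma thp_out c a : ~ (is_atom c /\ cin th c a) -> thp a c = None.
Proof. intro Hn. unfold thp. destruct (excluded_middle_informative _) as [[Hat Hnz]|_]; [|reflexivity].
  exfalso; apply Hn; split; [assumption| apply (proj1 (L_P c a Hat)); assumption]. Qed.

Lemma thp_Some c a (y : A) : thp a c = Some y -> is_atom c /\ cin th c a /\ y = res c a.
Proof. unfold thp. destruct (excluded_middle_informative _) as [[Hat Hnz]|_]; intro E; [|discriminate].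
  injection E; intro; subst. split; [assumption|split; [apply (proj1 (L_P c a Hat)); assumption|reflexivity]]. Qed.

Lemma thp_nat c (Hn : ~ is_atom c) a : thp a c = None.
Proof. apply thp_out. intros [h _]. auto. Qed.

Lemma thp_eqdom c d e : is_atom c -> (forall x, th c x <> None -> th d x = th e x) -> thp d c = thp e c.
Proof. intros Hat Hx. destruct (classic (cin th c e)) as [Ie|Ne].
  - assert (Id : cin th c d). { destruct Ie as [x [Hc He]]. exists x. rewrite Hx; auto. }
    rewrite (thp_in c d Hat Id), (thp_in c e Hat Ie). f_equal. apply L_val. exact Hx.
  - rewrite (thp_out c e (fun h => Ne (proj2 h))). apply thp_out. intros [_ [x [Hc Hd]]].
    apply Ne. exists x. rewrite <- Hx; auto. Qed.

Lemma thp_nodom c d : (forall x, th c x <> None -> th d x = None) -> thp d c = None.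
Proof. intro Hx. apply thp_out. intros [_ [x [Hc Hd]]]. apply Hd; auto. Qed.

Lemma opt_ne {T} (o : option T) : o <> None -> exists p, o = Some p.
Proof. destruct o; [eauto | congruence]. Qed.

Lemma thp_rep : atoms_separating A -> is_rep A A thp /\ meet_complete A A thp.
Proof.
  intro Hsep.
  assert (Hale : forall a b, (forall c, thp a c = thp b c) -> ale a b).
  { intros a b E. apply NNPP; intro Hn. destruct (Hsep a b Hn) as [c [Hat [Hca Hcb]]].
    destruct (L_atom_ne c Hat) as [x0 Hc0]. destruct (opt_ne _ Hc0) as [z Ez].
    assert (Ia : cin th c a). { exists x0. split; [auto|]. rewrite (L_ale_sub _ _ Hca x0 z Ez). discriminate. }
    pose proof (thp_in c a Hat Ia) as T. rewrite E in T. destruct (thp_Some _ _ _ T) as [_ [_ Hr]].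
    apply Hcb. unfold ale. change (res c b = c). unfold ale in Hca. change (res c a = c) in Hca.
    congruence. }
  split; [split; [|split; [|split; [|split]]]|].
  - intros a b E. apply L_antisym; apply Hale; intro c; [apply E| symmetry; apply E].
  - intros a b c. unfold pf_rst. destruct (classic (is_atom c)) as [Hat|Hnat];
      [| rewrite !(thp_nat c Hnat); reflexivity].
    destruct (classic (cin th c a)) as [Ia|Na].
    + rewrite (thp_in c a Hat Ia). apply thp_nodom. intros x Hc. apply rst_some_l.
      exact (L_cin_all c a Hat Ia x Hc).
    + rewrite (thp_out c a (fun h => Na (proj2 h))). apply thp_eqdom; auto.
      intros x Hc. apply rst_none_l. apply (L_dich _ _ Na x Hc).
  - intros m Hm a b. pose proof (proj1 (proj2 (proj2 H)) m Hm a b) as HM.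
    unfold pf_is_meet in *. intros c y.
    assert (SMa : sub (th (m a b)) (th a)). { intros x p Hx. apply HM in Hx. tauto. }
    assert (SMb : sub (th (m a b)) (th b)). { intros x p Hx. apply HM in Hx. tauto. }
    split.
    + intro E. destruct (thp_Some _ _ _ E) as [Hat [IM ->]].
      split; rewrite <- E; apply thp_eqdom; auto; intros x Hc;
        destruct (opt_ne _ (L_cin_all _ _ Hat IM x Hc)) as [p Ep]; rewrite Ep;
        first [apply SMa | apply SMb]; exact Ep.
    + intros [Ea Eb]. destruct (thp_Some _ _ _ Ea) as [Hat [Ia ->]].
      destruct (thp_Some _ _ _ Eb) as [_ [Ib Hab]].
      pose proof (L_val_rev c a b Hab) as Vab. rewrite <- Ea. apply thp_eqdom; auto.
      intros x Hc. destruct (opt_ne _ (L_cin_all _ _ Hat Ia x Hc)) as [p Ep].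
      rewrite Ep. apply HM. split; auto. rewrite <- Vab; auto.
  - intros u Hu a b c. pose proof (proj1 (proj2 (proj2 (proj2 H))) u Hu a b) as HU.
    unfold pf_upd. destruct (classic (is_atom c)) as [Hat|Hnat];
      [| rewrite !(thp_nat c Hnat); reflexivity].
    destruct (classic (cin th c a)) as [Ia|Na].
    + rewrite (thp_in c a Hat Ia). destruct (classic (cin th c b)) as [Ib|Nb].
      * rewrite (thp_in c b Hat Ib). rewrite <- (thp_in c b Hat Ib). apply thp_eqdom; auto.
        intros x Hc. rewrite HU. unfold pf_upd.
        destruct (opt_ne _ (L_cin_all _ _ Hat Ia x Hc)) as [p Ep].
        destruct (opt_ne _ (L_cin_all _ _ Hat Ib x Hc)) as [q Eq]. rewrite Ep, Eq. reflexivity.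
      * rewrite (thp_out c b (fun h => Nb (proj2 h))). rewrite <- (thp_in c a Hat Ia).
        apply thp_eqdom; auto. intros x Hc. rewrite HU. unfold pf_upd.
        rewrite (L_dich _ _ Nb x Hc). destruct (th a x); reflexivity.
    + rewrite (thp_out c a (fun h => Na (proj2 h))). apply thp_nodom. intros x Hc.
      rewrite HU. unfold pf_upd. rewrite (L_dich _ _ Na x Hc). reflexivity.
  - intros j Hj a b c. pose proof (proj2 (proj2 (proj2 (proj2 H))) j Hj a b) as HJ.
    unfold pf_join. destruct (classic (is_atom c)) as [Hat|Hnat];
      [| rewrite !(thp_nat c Hnat); reflexivity].
    destruct (classic (cin th c a)) as [Ia|Na].
    + rewrite (thp_in c a Hat Ia). rewrite <- (thp_in c a Hat Ia). apply thp_eqdom; auto.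
      intros x Hc. rewrite HJ. unfold pf_join.
      destruct (opt_ne _ (L_cin_all _ _ Hat Ia x Hc)) as [p Ep]. rewrite Ep. reflexivity.
    + rewrite (thp_out c a (fun h => Na (proj2 h))). apply thp_eqdom; auto.
      intros x Hc. rewrite HJ. unfold pf_join. rewrite (L_dich _ _ Na x Hc). reflexivity.
  - intros S m [s0 Hs0] [Hlb Hglb] c y. split.
    + intros E s Hs. destruct (thp_Some _ _ _ E) as [Hat [IM ->]]. rewrite <- E. symmetry. apply thp_eqdom; auto.
      intros x Hc. destruct (opt_ne _ (L_cin_all _ _ Hat IM x Hc)) as [p Ep].
      rewrite Ep. symmetry. apply (L_ale_sub _ _ (Hlb s Hs)). exact Ep.
    + intro Hall. destruct (thp_Some _ _ _ (Hall s0 Hs0)) as [Hat [I0 Hy0]].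
      assert (Hys : forall s, S s -> ale y s).
      { intros s Hs. destruct (thp_Some _ _ _ (Hall s Hs)) as [_ [_ ->]].
        apply L_sub_ale. intros x w. rewrite L_res. destruct (th c x); [auto|discriminate]. }
      pose proof (L_ale_sub _ _ (Hglb y Hys)) as Sym.
      assert (Vm : forall x, th c x <> None -> th s0 x = th m x).
      { intros x Hc. destruct (opt_ne _ (L_cin_all _ _ Hat I0 x Hc)) as [p Ep].
        rewrite Ep. symmetry. apply Sym. rewrite Hy0, L_res.
        destruct (th c x); [exact Ep| congruence]. }
      rewrite Hy0. rewrite <- (thp_in c s0 Hat I0). symmetry. apply thp_eqdom; auto.
Qed.

Lemma sep_of_mc : meet_complete A X th -> atoms_separating A.
Proof.
  intros Hmc a b Nab.
  assert (exists x y, th a x = Some y /\ th b x <> Some y) as [x [y [Ea Eb]]].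
  { apply NNPP; intro Hn; apply Nab; apply L_sub_ale; intros x y Ex; apply NNPP; intro Hb;
      apply Hn; exists x, y; auto. }
  apply NNPP; intro Hno.
  set (S := fun t => ale t a /\ th t x = Some y).
  assert (Saa : S a). { split; [apply L_sub_ale; intros ? ? ?; auto | exact Ea]. }
  assert (claim : forall l, (forall s, S s -> ale l s) -> forall x', th l x' = None).
  { intros l Hl. pose proof (L_ale_sub _ _ (Hl a Saa)) as Sla.
    destruct (th l x) as [y'|] eqn:El.
    - exfalso. assert (y' = y) by (pose proof (Sla x y' El); congruence). subst y'.
      apply Hno. exists l. split; [split|split; [apply L_sub_ale; exact Sla|]].
      + intro Z. rewrite L_zero in Z. congruence.
      + intros d Hdl. pose proof (L_ale_sub _ _ Hdl) as Sdl.
        destruct (th d x) as [z|] eqn:Ed.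
        * right. assert (Sd : S d).
          { split; [apply L_sub_ale; intros ? ? ?; auto|]. pose proof (Sdl x z Ed). congruence. }
          apply L_antisym; auto.
        * left. assert (Sd : S (rst A d l)).
          { split.
            - apply L_sub_ale. intros x' w Hw. apply rst_some in Hw. apply Sla. tauto.
            - rewrite rst_none_l; auto. }
          pose proof (L_ale_sub _ _ (Hl _ Sd)) as Sld.
          apply L_zero. intro x'. destruct (th d x') as [w|] eqn:Ew; [|reflexivity].
          exfalso. pose proof (rst_some _ _ _ _ (Sld x' w (Sdl x' w Ew))). intuition congruence.
      + intro Hlb. apply Eb. apply (L_ale_sub _ _ Hlb). exact El.
    - assert (Sd : S (rst A l a)).
      { split.
        - apply L_sub_ale. intros x' w Hw. apply rst_some in Hw. tauto.
        - rewrite rst_none_l; auto. }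
      pose proof (L_ale_sub _ _ (Hl _ Sd)) as Sld.
      intro x'. destruct (th l x') as [w|] eqn:Ew; [|reflexivity].
      exfalso. pose proof (rst_some _ _ _ _ (Sld x' w Ew)). intuition congruence. }
  assert (G : is_glb S (rst A a a)).
  { split.
    - intros s _. apply L_sub_ale. intros x' y' E. rewrite rst_self in E. discriminate.
    - intros l Hl. apply L_sub_ale. intros x' y' E. rewrite (claim l Hl x') in E. discriminate. }
  pose proof (proj2 (Hmc S _ (ex_intro _ a Saa) G x y) (fun s Hs => proj2 Hs)) as F.
  rewrite rst_self in F. discriminate.
Qed.

End S.

Theorem corollary6p3 (A : sigma_alg) :
  has_meet_complete_rep A <-> (representable A /\ atoms_separating A).
Proof.
  split.
  - intros [X [th [H Hmc]]]. split; [exists X, th; exact H | exact (sep_of_mc H Hmc)].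
  - intros [[X [th H]] Hsep]. exists A, (@thp A). exact (thp_rep H Hsep).
Qed.
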